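(* Let $m \geq 4$ be an integer, let $p$ be a prime with $\gcd(p, m) = 1$, and let $n_0$ be a positive integer with $n_0 \equiv 1 \pmod{p}$. Then there are no polynomials $x(\lambda), y(\lambda), z(\lambda)$ with positive integer coefficients such that $$\frac{m}{n_0 + p\lambda} = \frac{1}{x(\lambda)} + \frac{1}{y(\lambda)} + \frac{1}{z(\lambda)}$$ holds identically in $\lambda$.
   Context: $\lambda$ is an indeterminate. *)

(* Defs.v *)
From HB Require Import structures.
From mathcomp Require Import all_boot all_order all_algebra.
Set Implicit Arguments. Unset Strict Implicit. Unset Printing Implicit Defensive.
Import Order.TTheory GRing.Theory Num.Theory.
Local Open Scope ring_scope.

Definition pos_int_coef_poly (x : {poly int}) : Prop :=
  x != 0 /\ forall i : nat, 0 <= x`_i.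

Definition evalQ (x : {poly int}) (l : rat) : rat := (map_poly intr x).[l].

(* Main.v *)
Require Import Defs.
From HB Require Import structures.
From mathcomp Require Import all_boot all_order all_algebra.
From mathcomp Require Import ring lra zify.
Import Order.TTheory GRing.Theory Num.Theory.
Local Open Scope ring_scope.


Definition nneg (P : {poly rat}) := forall i, 0 <= P`_i.

Lemma nnegM {P Q} : nneg P -> nneg Q -> nneg (P * Q).
Proof. move=> hP hQ i; rewrite coefM; apply: sumr_ge0 => j _; exact: mulr_ge0. Qed.

Lemma nnegD {P Q} : nneg P -> nneg Q -> nneg (P + Q).
Proof. move=> hP hQ i; rewrite coefD; exact: addr_ge0. Qed.

Lemma lead_pos {P} : nneg P -> P != 0 -> 0 < lead_coef P.
Proof. by move=> hP nz; rewrite lt_def lead_coef_eq0 nz lead_coefE hP. Qed.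

Lemma size_nnD_l {P Q} : nneg P -> nneg Q -> (size P <= size (P + Q)%R)%N.
Proof.
move=> hP hQ; have [->|nz] := eqVneq P 0; first by rewrite size_poly0.
have sP : (0 < size P)%N by rewrite size_poly_gt0.
rewrite leqNgt; apply/negP => h.
have : (size (P + Q)%R <= (size P).-1)%N by rewrite -ltnS prednK.
move/leq_sizeP => /(_ (size P).-1 (leqnn _)); rewrite coefD.
have := lead_pos hP nz; rewrite lead_coefE => h1 h2.
have := hQ (size P).-1 => h3. lra.
Qed.

Lemma size_nnD {P Q} : nneg P -> nneg Q -> size (P + Q) = maxn (size P) (size Q).
Proof.
move=> hP hQ; apply/eqP; rewrite eqn_leq size_polyD /= geq_max size_nnD_l //.
by rewrite addrC size_nnD_l.
Qed.

Lemma horner_pos {P t} : nneg P -> P != 0 -> 0 < t -> 0 < P.[t].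
Proof.
move=> hP nz t0; rewrite horner_coef.
have sP : (0 < size P)%N by rewrite size_poly_gt0.
move: (lead_pos hP nz); rewrite lead_coefE.
case: (size P) sP => // n _ hl.
rewrite (bigD1 ord_max) //=.
apply: (@lt_le_trans _ _ (P`_n * t ^+ n)); first by rewrite mulr_gt0 // exprn_gt0.
rewrite lerDl; apply: sumr_ge0 => i _; apply: mulr_ge0 => //; exact: exprn_ge0 (ltW t0).
Qed.

Lemma poly_eq0_all {P : {poly rat}} : (forall l, P.[l] = 0) -> P = 0.
Proof.
move=> h; apply: (@roots_geq_poly_eq0 _ P [seq i%:R | i <- iota 0 (size P)]).
- by apply/allP => x /mapP [i _ ->]; rewrite /root h.
- rewrite map_inj_uniq ?iota_uniq //; exact: (mulrIn (oner_neq0 _)).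
- by rewrite size_map size_iota.
Qed.

Lemma lin2 {P : {poly rat}} : (size P <= 2)%N -> P = P`_1 *: 'X + (P`_0)%:P.
Proof.
move=> hs; apply/polyP => i; rewrite coefD coefZ coefX coefC.
case: i => [|[|i]] /=; rewrite ?mulr0 ?mulr1 ?add0r ?addr0 //.
by move/leq_sizeP: hs => ->.
Qed.

Notation hE := (hornerD, hornerN, hornerM, hornerC, hornerX, hornerZ).


Lemma lin2h (P : {poly rat}) t : (size P <= 2)%N -> P.[t] = P`_1 * t + P`_0.
Proof. by move=> h; rewrite {1}(lin2 h) !hE. Qed.

Lemma caseII (m p k : rat) (X Y Z : {poly rat}) :
  0 < p -> 0 <= k -> 0 < m ->
  nneg X -> nneg Y -> nneg Z -> X != 0 -> Y != 0 -> Z != 0 ->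
  size X = 2%N -> size Y = 2%N ->
  X.[-k] = 0 -> Y.[-k] != 0 -> Z.[-k] = 0 ->
  m%:P * (X * Y * Z) = (p%:P * 'X + (p * k + 1)%:P) * (X * Y + Y * Z + Z * X) -> False.
Proof.
move=> p0 k0 m0 nX nY nZ X0 Y0 Z0 sX sY Xk Yk Zk HI.
set L := (p%:P * 'X + (p * k + 1)%:P) in HI.
have Lh : forall t, L.[t] = p * (t + k) + 1 by move=> t; rewrite /L !hE; ring.
pose a := X`_1; pose g := Y`_1; pose d := Y`_0.
have a0 : 0 < a by have := lead_pos nX X0; rewrite lead_coefE sX.
have g0 : 0 < g by have := lead_pos nY Y0; rewrite lead_coefE sY.
have d0 : 0 <= d by exact: nY.
have Yh : forall t, Y.[t] = g * t + d by move=> t; rewrite lin2h ?sY.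
pose e := 'X + k%:P.
have eh : forall t, e.[t] = t + k by move=> t; rewrite /e !hE.
have HX : X = a%:P * e.
  rewrite {1}(lin2 (eq_leq sX)) /e.
  have : X.[-k] = a * (-k) + X`_0 by rewrite lin2h ?sX.
  rewrite Xk => h0; have -> : X`_0 = a * k by lra.
  by rewrite -mul_polyC polyCM; ring.
have [Z1 HZ] : exists Z1, Z = Z1 * e.
  have /factor_theorem [Z1 ->] : root Z (-k) by rewrite /root Zk.
  by exists Z1; rewrite /e polyCN opprK.
have enz : e != 0 by rewrite -size_poly_eq0 /e -[k]opprK polyCN size_XsubC.
have HI2 : (m * a)%:P * e * Y * Z1 = L * (a%:P * Y + Y * Z1 + a%:P * e * Z1).
  apply: (mulfI enz); apply/eqP; rewrite -subr_eq0; apply/eqP.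
  transitivity (m%:P * (X * Y * Z) - L * (X * Y + Y * Z + Z * X)).
    by rewrite HX HZ polyCM; ring.
  by rewrite HI subrr.
have Ipt : forall t, m * a * (t + k) * Y.[t] * Z1.[t] = L.[t] * (a * Y.[t] + Y.[t] * Z1.[t] + a * (t + k) * Z1.[t]).
  by move=> t; have := congr1 (fun P => P.[t]) HI2; rewrite /= !hE.
have z1k : Z1.[-k] = - a.
  have := Ipt (-k); rewrite Lh addNr !(mulr0, mul0r, addr0, add0r, mul1r).
  move=> h; have : Y.[-k] * (Z1.[-k] + a) = 0 by rewrite [RHS]h; ring.
  by move/eqP; rewrite mulf_eq0 (negPf Yk) /= addr_eq0 => /eqP.
have z11 : 0 < Z1.[1].
  have := horner_pos nZ Z0 (ltr01 : 0 < 1); rewrite HZ hornerM eh.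
  rewrite pmulr_lgt0 //; lra.
have Z10 : Z1 != 0 by apply: contraNneq Z0; rewrite HZ => ->; rewrite mul0r.
have sZ1 : size Z = (size Z1).+1.
  by rewrite HZ size_mul // /e size_XaddC addn2.
have lZ1 : lead_coef Z1 = lead_coef Z by rewrite HZ lead_coefM lead_coefXaddC mulr1.
have lZ0 := lead_pos nZ Z0.
have [s1|s2] := leqP (size Z1) 1.
  have c1 : Z1.[1] = Z1.[-k] by rewrite (size1_polyC s1) !hornerC.
  lra.
have [s3|s3] := leqP (size Z1) 2.
  have s22 : size Z1 = 2%N by apply/eqP; rewrite eqn_leq s3.
  pose z := Z1`_1; pose z0 := Z1`_0.
  have zp : 0 < z by move: lZ0; rewrite -lZ1 lead_coefE s22.
  have Z1h : forall t, Z1.[t] = z * t + z0 by move=> t; rewrite lin2h.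
  have ez0 : z0 = z * k - a by move: z1k; rewrite Z1h; lra.
  pose r := - k - p^-1.
  have pinv : p * p^-1 = 1 by rewrite mulfV // gt_eqF.
  have pi0 : 0 < p^-1 by rewrite invr_gt0.
  have Yr : Y.[r] = 0.
    have := Ipt r; rewrite Lh.
    have -> : p * (r + k) + 1 = 0 by rewrite /r; lra.
    rewrite mul0r => /eqP; rewrite !mulf_eq0 -!orbA => /or4P [| | |/orP[]].
    - by rewrite gt_eqF.
    - by rewrite gt_eqF.
    - rewrite /r; move/eqP => h; lra.
    - by move/eqP.
    - rewrite Z1h ez0 /r => /eqP h. nra.
  pose t1 := - k + a / z.
  have az0 : 0 < a / z by rewrite divr_gt0.
  have := Ipt t1; rewrite Z1h.
  have -> : z * t1 + z0 = 0 by rewrite /t1 ez0 mulrDr mulrCA mulfV ?gt_eqF //; lra.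
  rewrite !(mulr0, addr0) Lh.
  have Lt1 : 0 < p * (t1 + k) + 1 by rewrite /t1 (_ : - k + a / z + k = a / z); [nra | ring].
  have Yt1 : 0 < Y.[t1].
    move: Yr; rewrite !Yh /r /t1 => h.
    have -> : g * (- k + a / z) + d = g * (a / z + p^-1) by lra.
    by rewrite mulr_gt0 // addr_gt0.
  move=> /esym/eqP; rewrite !mulf_eq0 !gt_eqF //.
pose Q := (m * a)%:P * e * Y - L * Y - a%:P * L * e.
have HQ : Z1 * Q = a%:P * L * Y.
  apply/eqP; rewrite -subr_eq0; apply/eqP.
  transitivity ((m * a)%:P * e * Y * Z1 - L * (a%:P * Y + Y * Z1 + a%:P * e * Z1)).
    by rewrite /Q; ring.
  by rewrite HI2 subrr.
have sL : (size L <= 2)%N.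
  rewrite /L (leq_trans (size_polyD _ _)) // geq_max (leq_trans (size_polyC_leq1 _)) // andbT.
  by rewrite (leq_trans (size_mul_leq _ _)) // size_polyX size_polyC; case: (p != 0).
have sQ : (size Q <= 1)%N.
  have [->|Qnz] := eqVneq Q 0; first by rewrite size_poly0.
  have h3 : (size (a%:P * L * Y)%R <= 3)%N.
    rewrite -mulrA size_Cmul ?gt_eqF //.
    have h := size_mul_leq L Y; rewrite sY in h.
    apply: (leq_trans h); rewrite addn2 /=; exact: sL.
  move: h3; rewrite -HQ size_mul // => h3.
  move: s3 h3; case: (size Q) => [|[|q]] //=; rewrite addnS /= => h1 h2.
  move: h2; rewrite addnS ltnS => h2; have := leq_trans (leq_addr q (size Z1)) h2; by rewrite leqNgt h1.
pose c := Q`_0.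
have Qh : forall t, Q.[t] = c by move=> t; rewrite (size1_polyC sQ) hornerC.
have Qe : forall t, Q.[t] = m * a * (t + k) * Y.[t] - L.[t] * Y.[t] - a * L.[t] * (t + k).
  by move=> t; rewrite /Q !hE.
have cY : c = - Y.[-k] by rewrite -(Qh (-k)) Qe Lh addNr; ring.
have cpos : 0 < c.
  have := congr1 (fun P => P.[1]) HQ; rewrite /= [in LHS]hornerM Qh !hornerM hornerC Lh.
  have : 0 < Y.[1] by apply: horner_pos.
  move=> y1 h; have : 0 < Z1.[1] * c by rewrite h !mulr_gt0 //; nra.
  by rewrite pmulr_rgt0.
have gk : g * k - d > 0 by move: cY; rewrite Yh; lra.
pose ty := - (d / g).
have Yty : Y.[ty] = 0 by rewrite Yh /ty mulrN mulrC divfK ?gt_eqF // addNr.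
have tyk : 0 < ty + k.
  have -> : ty + k = (g * k - d) / g by rewrite /ty; field; rewrite gt_eqF.
  by rewrite divr_gt0.
have := Qe ty; rewrite Qh Yty !(mulr0, subr0, sub0r) Lh => h.
have : 0 < a * (p * (ty + k) + 1) * (ty + k) by rewrite !mulr_gt0 //; nra.
lra.
Qed.

Lemma caseI (m p k a g : rat) (z : rat -> rat) :
  0 < p -> 0 <= k -> 0 < a -> 0 < g -> 0 < z 1 ->
  (forall t, m * (a * (t + k)) * (g * (t + k)) * z t =
     (p * t + (p * k + 1)) * (a * (t + k) * (g * (t + k)) + g * (t + k) * z t + z t * (a * (t + k)))) ->
  False.
Proof.
move=> p0 k0 a0 g0 z1 H.
pose A := m * a * g - p * (a + g).
have step : forall t, (t + k) * (z t * (A * (t + k) - (a + g)) - (p * (t + k) + 1) * a * g * (t + k)) = 0.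
  move=> t; have := H t => h.
  transitivity (m * (a * (t + k)) * (g * (t + k)) * z t -
     (p * t + (p * k + 1)) * (a * (t + k) * (g * (t + k)) + g * (t + k) * z t + z t * (a * (t + k)))).
    by rewrite /A; ring.
  by rewrite h subrr.
have e1 : 0 < 1 + k by lra.
have h1 : z 1 * (A * (1 + k) - (a + g)) = (p * (1 + k) + 1) * a * g * (1 + k).
  apply/eqP; rewrite -subr_eq0; apply/eqP.
  by have /eqP := step 1; rewrite mulf_eq0 (gt_eqF e1) /= => /eqP.
have pos : 0 < (p * (1 + k) + 1) * a * g * (1 + k).
  by rewrite !mulr_gt0 //; nra.
have hA1 : 0 < A * (1 + k) - (a + g).
  by rewrite -h1 in pos; rewrite -(pmulr_rgt0 _ z1).
have hA : 0 < A.
  have : 0 < A * (1 + k) by lra.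
  by rewrite pmulr_lgt0.
pose f := (a + g) / A.
have f0 : 0 < f by rewrite /f divr_gt0 //; lra.
have := step (f - k); rewrite subrK.
have -> : A * f - (a + g) = 0 by rewrite /f mulrC divfK ?subrr // gt_eqF.
rewrite mulr0 sub0r mulrN => /eqP; rewrite oppr_eq0.
rewrite !mulf_eq0 !gt_eqF // ?invr_gt0 //; nra.
Qed.


Lemma bound3 (m : nat) (a b c : int) : (4 <= m)%N -> a != 0 -> b != 0 -> c != 0 ->
  m%:Z * a * b * c != a * b + b * c + c * a.
Proof.
move=> m4 a0 b0 c0; apply/negP => /eqP h.
have hn := congr1 Num.norm h.
have A1 : 1 <= `|a| by rewrite -gtz0_ge1 normr_gt0.
have B1 : 1 <= `|b| by rewrite -gtz0_ge1 normr_gt0.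
have C1 : 1 <= `|c| by rewrite -gtz0_ge1 normr_gt0.
have tri : `|a * b + b * c + c * a| <= `|a| * `|b| + `|b| * `|c| + `|c| * `|a|.
  by rewrite -!normrM (le_trans (ler_normD _ _)) // lerD2r ler_normD.
rewrite !normrM in hn.
have m4' : 4 <= `|m%:Z| by rewrite ger0_norm // lez_nat.
set A := `|a| in A1 hn tri; set B := `|b| in B1 hn tri; set C := `|c| in C1 hn tri.
set M := `|m%:Z| in hn m4'.
have P1 : 1 <= A * B * C by rewrite -[1]mulr1 ler_pM // -[1]mulr1 ler_pM.
have h1 : A * B <= A * B * C by rewrite ler_peMr // mulr_ge0 // (le_trans ler01).
have h2 : B * C <= A * B * C by rewrite -mulrA ler_peMl // mulr_ge0 // (le_trans ler01).
have h3 : C * A <= A * B * C by rewrite mulrC mulrAC ler_peMr // mulr_ge0 // (le_trans ler01).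
have : M * (A * B * C) <= 3 * (A * B * C) by rewrite !mulrA hn; lra.
nra.
Qed.


Notation mq x := (map_poly intr x : {poly rat}).

Lemma mq_size (x : {poly int}) : size (mq x) = size x.
Proof. by rewrite size_map_inj_poly //; exact: intr_inj. Qed.

Lemma mq_eval (x : {poly int}) (k : nat) : (mq x).[- k%:R] = (x.[- k%:Z])%:~R.
Proof. by rewrite -horner_map /= rmorphN /=. Qed.

Lemma mp_contra {m p : nat} {i : int} : (4 <= m)%N -> prime p -> coprime p m -> 0 <= i ->
  (m%:R : rat) * i%:~R = p%:R -> False.
Proof.
move=> m4 pp cpm; case: i => // n _.
rewrite -[n%:Z%:~R]/(n%:R) -natrM => /eqP; rewrite eqr_nat => /eqP h.
have : (m %| p)%N by rewrite -h dvdn_mulr.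
move/(prime_nt_dvdP pp); rewrite (_ : (m != 1)%N) => [/(_ isT) e|]; last by apply/eqP => e; rewrite e in m4.
move: cpm; rewrite e /coprime gcdnn => /eqP p1; rewrite p1 in pp.
by [].
Qed.

Lemma mainord (m p k : nat) (x y z : {poly int}) :
  (4 <= m)%N -> prime p -> coprime p m ->
  nneg (mq x) -> nneg (mq y) -> nneg (mq z) ->
  x != 0 -> y != 0 -> z != 0 ->
  (size x <= size y)%N -> (size y <= size z)%N ->
  (m%:R)%:P * (mq x * mq y * mq z) =
    ((p%:R)%:P * 'X + (p%:R * k%:R + 1)%:P) * (mq x * mq y + mq y * mq z + mq z * mq x) ->
  False.
Proof.
move=> m4 pp cpm nX nY nZ x0 y0 z0 sxy syz.
set X := mq x; set Y := mq y; set Z := mq z.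
set L := (_ * 'X + _).
move=> HI.
have X0 : X != 0 by rewrite -size_poly_eq0 mq_size size_poly_eq0.
have Y0 : Y != 0 by rewrite -size_poly_eq0 mq_size size_poly_eq0.
have Z0 : Z != 0 by rewrite -size_poly_eq0 mq_size size_poly_eq0.
have p1 : (1 < p)%N by exact: prime_gt1.
have pr0 : 0 < (p%:R : rat) by rewrite ltr0n; lia.
have mr0 : 0 < (m%:R : rat) by rewrite ltr0n; lia.
have sL : size L = 2%N by rewrite /L size_MXaddC polyC_eq0 (gt_eqF pr0) /= size_polyC (gt_eqF pr0).
have L0 : L != 0 by rewrite -size_poly_eq0 sL.
have sX1 : (0 < size X)%N by rewrite size_poly_gt0.
have sY1 : (0 < size Y)%N by rewrite size_poly_gt0.
have sZ1 : (0 < size Z)%N by rewrite size_poly_gt0.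
rewrite -!(mq_size) -/X -/Y -/Z in sxy syz.
have sS : size (X * Y + Y * Z + Z * X) = maxn (maxn (size X + size Y).-1 (size Y + size Z).-1) (size Z + size X).-1.
  have nXY := nnegM nX nY; have nYZ := nnegM nY nZ; have nZX := nnegM nZ nX.
  have nS1 := nnegD nXY nYZ.
  by rewrite !size_nnD // (size_mul X0 Y0) (size_mul Y0 Z0) (size_mul Z0 X0).
have S0 : X * Y + Y * Z + Z * X != 0.
  by rewrite -size_poly_eq0 sS; move: sX1 sY1 sZ1; move: (size X) (size Y) (size Z) => a b c; clear; lia.
have sX : size X = 2%N.
  have : size ((m%:R)%:P * (X * Y * Z)) = size (L * (X * Y + Y * Z + Z * X)) by rewrite HI.
  rewrite size_Cmul ?(gt_eqF mr0) // !size_mul ?mulf_neq0 // sL sS.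
  move: sxy syz sX1 sY1 sZ1; move: (size X) (size Y) (size Z) => a b c; clear; lia.
have sY : size Y = 2%N.
  pose M := (m%:R)%:P * X - L.
  have HM : (Y + Z) * L * X = M * Y * Z.
    apply/eqP; rewrite -subr_eq0; apply/eqP.
    transitivity (L * (X * Y + Y * Z + Z * X) - (m%:R)%:P * (X * Y * Z)); first by rewrite /M; ring.
    by rewrite HI subrr.
  have sYZ : size (Y + Z) = size Z by rewrite size_nnD // (maxn_idPr syz).
  have YZ0 : Y + Z != 0 by rewrite -size_poly_eq0 sYZ size_poly_eq0.
  have M0 : M != 0.
    apply/negP => /eqP M0; move: HM; rewrite M0 !mul0r => /eqP.
    by rewrite !mulf_eq0 (negPf YZ0) (negPf L0) (negPf X0).
  have : size ((Y + Z) * L * X) = size (M * Y * Z) by rewrite HM.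
  rewrite !size_mul ?mulf_neq0 // sYZ sL sX => h.
  have [s2|s3] := leqP (size Y) 2.
    by apply/eqP; rewrite eqn_leq s2 -sX sxy.
  have sM : (size M <= 1)%N by move: h s3 sZ1; move: (size M) (size Y) (size Z) => a b c; clear; lia.
  move/leq_sizeP: sM => /(_ 1%N isT).
  rewrite /M coefB coefCM coefD coefCM coefX coefC /= mulr1 addr0 coef_map /=.
  move/eqP; rewrite subr_eq0 => /eqP h1; exfalso.
  apply: (mp_contra m4 pp cpm _ h1).
  by have := nX 1%N; rewrite coef_map /= ler0z.
have Lh : forall t, L.[t] = p%:R * t + (p%:R * k%:R + 1).
  by move=> t; rewrite /L hornerD hornerC hornerM hornerC hornerX.
have HIc : (m%:R)%:P * (X * Y * Z) = ((p%:R)%:P * 'X + (p%:R * k%:R + 1)%:P) * (X * Y + Y * Z + Z * X) := HI.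
clearbody L.
have Ipt : forall t, m%:R * X.[t] * Y.[t] * Z.[t] = L.[t] * (X.[t] * Y.[t] + Y.[t] * Z.[t] + Z.[t] * X.[t]).
  move=> t; have := congr1 (fun P => P.[t]) HI.
  by rewrite /= !(hornerM, hornerD, hornerC) !mulrA.
have Lk : L.[- k%:R] = 1 by rewrite Lh; ring.
have k0 : 0 <= (k%:R : rat) by rewrite ler0n.
have I0 := Ipt (- k%:R); rewrite Lk mul1r in I0.
have [a0|a0] := eqVneq X.[- k%:R] 0; have [b0|b0] := eqVneq Y.[- k%:R] 0.
- have Xh : forall t, X.[t] = X`_1 * (t + k%:R).
    move=> t; have := lin2h X (- k%:R) (eq_leq sX); rewrite a0 => h0.
    by rewrite lin2h ?sX //; lra.
  have Yh : forall t, Y.[t] = Y`_1 * (t + k%:R).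
    move=> t; have := lin2h Y (- k%:R) (eq_leq sY); rewrite b0 => h0.
    by rewrite lin2h ?sY //; lra.
  apply: (@caseI (m%:R) (p%:R) (k%:R) X`_1 Y`_1 (fun t => Z.[t])) => //.
  + by have := lead_pos nX X0; rewrite lead_coefE sX.
  + by have := lead_pos nY Y0; rewrite lead_coefE sY.
  + exact: horner_pos.
  + by move=> t; rewrite -!Xh -!Yh Ipt Lh.
- have c0 : Z.[- k%:R] = 0.
    move: I0; rewrite a0 !(mulr0, mul0r, addr0, add0r) => /esym/eqP.
    by rewrite mulf_eq0 (negPf b0) => /eqP.
  exact: (caseII (m%:R) (p%:R) (k%:R) X Y Z pr0 k0 mr0 nX nY nZ X0 Y0 Z0 sX sY a0 b0 c0 HIc).
- have c0 : Z.[- k%:R] = 0.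
    move: I0; rewrite b0 !(mulr0, mul0r, addr0, add0r) => /esym/eqP.
    by rewrite mulf_eq0 (negPf a0) orbF => /eqP.
  apply: (caseII (m%:R) (p%:R) (k%:R) Y X Z pr0 k0 mr0 nY nX nZ Y0 X0 Z0 sY sX b0 a0 c0).
  transitivity ((m%:R)%:P * (X * Y * Z)); first by ring.
  by rewrite HIc; ring.
- have [c0|c0] := eqVneq Z.[- k%:R] 0.
    move: I0; rewrite c0 !(mulr0, mul0r, addr0, add0r) => /esym/eqP.
    by rewrite mulf_eq0 (negPf a0) (negPf b0).
  move: I0 a0 b0 c0; rewrite !mq_eval -!intrM -!intrD -[m%:R]/((m%:Z)%:~R) -!intrM.
  move=> /eqP; rewrite eqr_int => /eqP h; rewrite !intr_eq0 => a0 b0 c0.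
  by move: (bound3 m _ _ _ m4 a0 b0 c0); rewrite h eqxx.
Qed.

Theorem corollary4 (m p n0 : nat) :
  (4 <= m)%N -> prime p -> coprime p m -> (0 < n0)%N -> n0 = 1 %[mod p] ->
  ~ (exists x y z : {poly int},
        [/\ pos_int_coef_poly x, pos_int_coef_poly y, pos_int_coef_poly z &
         forall l : rat,
           n0%:R + p%:R * l != 0 -> evalQ x l != 0 -> evalQ y l != 0 ->
           evalQ z l != 0 ->
           m%:R / (n0%:R + p%:R * l) = 1 / evalQ x l + 1 / evalQ y l + 1 / evalQ z l]).
Proof.
move=> m4 pp cpm n0pos n0mod [x [y [z [[x0 nx] [y0 ny] [z0 nz] H]]]].
pose k := (n0 %/ p)%N.
have p1 : (1 < p)%N by exact: prime_gt1.
have en0 : n0 = (p * k + 1)%N.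
  by rewrite {1}(divn_eq n0 p) n0mod (modn_small p1) mulnC.
have nX : nneg (mq x) by move=> i; rewrite coef_map /= ler0z.
have nY : nneg (mq y) by move=> i; rewrite coef_map /= ler0z.
have nZ : nneg (mq z) by move=> i; rewrite coef_map /= ler0z.
have X0 : mq x != 0 by rewrite -size_poly_eq0 mq_size size_poly_eq0.
have Y0 : mq y != 0 by rewrite -size_poly_eq0 mq_size size_poly_eq0.
have Z0 : mq z != 0 by rewrite -size_poly_eq0 mq_size size_poly_eq0.
set X := mq x in nX X0 H *; set Y := mq y in nY Y0 H *; set Z := mq z in nZ Z0 H *.
pose L : {poly rat} := (p%:R)%:P * 'X + (p%:R * k%:R + 1)%:P.
have Lh : forall t, L.[t] = n0%:R + p%:R * t.
  by move=> t; rewrite /L hornerD hornerC hornerM hornerC hornerX en0 natrD natrM; ring.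
have pr0 : 0 < (p%:R : rat) by rewrite ltr0n; lia.
have L0 : L != 0.
  by rewrite -size_poly_eq0 /L size_MXaddC polyC_eq0 (gt_eqF pr0).
have HI : (m%:R)%:P * (X * Y * Z) = L * (X * Y + Y * Z + Z * X).
  pose R := ((m%:R)%:P * (X * Y * Z) - L * (X * Y + Y * Z + Z * X)) * (L * X * Y * Z).
  have R0 : R = 0.
    clearbody L; apply: poly_eq0_all => l.
    rewrite /R !(hornerM, hornerD, hornerN, hornerC) Lh.
    have [e|e1] := eqVneq (n0%:R + p%:R * l : rat) 0; first by rewrite e !(mulr0, mul0r).
    have [e|e2] := eqVneq X.[l] 0; first by rewrite e !(mulr0, mul0r).
    have [e|e3] := eqVneq Y.[l] 0; first by rewrite e !(mulr0, mul0r).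
    have [e|e4] := eqVneq Z.[l] 0; first by rewrite e !(mulr0, mul0r).
    have := H l e1 e2 e3 e4; rewrite /evalQ -/X -/Y -/Z => h.
    set a := X.[l] in e2 h *; set b := Y.[l] in e3 h *; set c := Z.[l] in e4 h *.
    set d := (n0%:R + p%:R * l : rat) in e1 h *.
    have -> : m%:R * (a * b * c) - d * (a * b + b * c + c * a) =
              (a * b * c * d) * (m%:R / d - (1 / a + 1 / b + 1 / c)).
    by field; rewrite e1 e2 e3 e4.
    by rewrite h subrr !mulr0 mul0r.
  have P0 : L * X * Y * Z != 0 by rewrite !mulf_neq0.
  by move: R0 => /eqP; rewrite /R mulf_eq0 (negPf P0) orbF subr_eq0 => /eqP.
have P := mainord m p k.
have [xy|yx] := leqP (size x) (size y); have [yz|zy] := leqP (size y) (size z);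
  have [xz|zx] := leqP (size x) (size z).
- exact: (P x y z m4 pp cpm nX nY nZ x0 y0 z0 xy yz HI).
- exact: (P x y z m4 pp cpm nX nY nZ x0 y0 z0 xy yz HI).
- apply: (P x z y m4 pp cpm nX nZ nY x0 z0 y0 xz (ltnW zy)).
  transitivity ((m%:R)%:P * (X * Y * Z)); first by ring.
  by rewrite HI /L -/X -/Y -/Z; ring.
- apply: (P z x y m4 pp cpm nZ nX nY z0 x0 y0 (ltnW zx) xy).
  transitivity ((m%:R)%:P * (X * Y * Z)); first by ring.
  by rewrite HI /L -/X -/Y -/Z; ring.
- apply: (P y x z m4 pp cpm nY nX nZ y0 x0 z0 (ltnW yx) xz).
  transitivity ((m%:R)%:P * (X * Y * Z)); first by ring.
  by rewrite HI /L -/X -/Y -/Z; ring.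
- apply: (P y z x m4 pp cpm nY nZ nX y0 z0 x0 yz (ltnW zx)).
  transitivity ((m%:R)%:P * (X * Y * Z)); first by ring.
  by rewrite HI /L -/X -/Y -/Z; ring.
- apply: (P z y x m4 pp cpm nZ nY nX z0 y0 x0 (ltnW zy) (ltnW yx)).
  transitivity ((m%:R)%:P * (X * Y * Z)); first by ring.
  by rewrite HI /L -/X -/Y -/Z; ring.
- apply: (P z y x m4 pp cpm nZ nY nX z0 y0 x0 (ltnW zy) (ltnW yx)).
  transitivity ((m%:R)%:P * (X * Y * Z)); first by ring.
  by rewrite HI /L -/X -/Y -/Z; ring.
Qed.
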